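(* Let $\mathbb{F}$ be an algebraically closed field with $\mathrm{char}\,\mathbb{F}=2$, let $\mathbb{M}\subseteq\mathbf{O}$ be the quaternion subalgebra, and let $\mathrm{Stab}_{{\rm G}_2}(\mathbb{M})=\{g\in{\rm G}_2\mid g\mathbb{M}\subseteq\mathbb{M}\}$. Then: 1. For every $a\in\mathbb{M}$ with $\mathrm{tr}(a)=1$ and $n(a)=0$ there exists $g\in\mathrm{Stab}_{{\rm G}_2}(\mathbb{M})$ with $ga=e_1$. 2. For every $a\in\mathbb{M}$ with $\mathrm{tr}(a)=0$ and $n(a)=1$ there exists $g\in\mathrm{Stab}_{{\rm G}_2}(\mathbb{M})$ with $ga\in\{1_{\mathbf{O}},1_{\mathbf{O}}+\mathbf{u}_1\}$. 3. For every non-zero $\gamma\in\mathbb{F}$ there exists $\xi_\gamma\in\mathrm{Stab}_{{\rm G}_2}(\mathbb{M})$ such that for all $\alpha_1,\ldots,\alpha_4\in\mathbb{F}$, $\xi_\gamma\begin{pmatrix}\alpha_1&(\alpha_2,0,0)\\(\alpha_3,0,0)&\alpha_4\end{pmatrix}=\begin{pmatrix}\alpha_1&(\gamma\alpha_2,0,0)\\(\gamma^{-1}\alpha_3,0,0)&\alpha_4\end{pmatrix}$. 4. If $b_1,b_2\in\mathbb{M}$ satisfy $\mathrm{tr}(b_1)=\mathrm{tr}(e_1)$, $\mathrm{tr}(b_2)=\mathrm{tr}(e_2)$, $n(b_1)=n(e_1)$, $n(b_2)=n(e_2)$ and $\mathrm{tr}(b_1b_2)=\mathrm{tr}(e_1e_2)$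 (i.e. $(e_1,e_2)$ and $(b_1,b_2)$ are not separated by $S_2^{(2)}$), then there exists $g\in\mathrm{Stab}_{{\rm G}_2}(\mathbb{M})$ with $gb_1=e_1$ and $gb_2\in\{e_2,e_2+\mathbf{u}_1,e_2+\mathbf{v}_1\}$. 5. If $b\in\mathbb{M}$ satisfies $\mathrm{tr}(b)=n(b)=\mathrm{tr}(e_1b)=0$, then $b\in\mathbb{F}\mathbf{u}_1$ or $b\in\mathbb{F}\mathbf{v}_1$.
   Context: The split octonion algebra $\mathbf{O}$ is the 8-dimensional $\mathbb{F}$-vector space of formal matrices $a=\begin{pmatrix}\alpha&\mathbf{u}\\ \mathbf{v}&\beta\end{pmatrix}$ with $\alpha,\beta\in\mathbb{F}$, $\mathbf{u},\mathbf{v}\in\mathbb{F}^3$, with multiplication $\begin{pmatrix}\alpha&\mathbf{u}\\ \mathbf{v}&\beta\end{pmatrix}\begin{pmatrix}\alpha'&\mathbf{u}'\\ \mathbf{v}'&\beta'\end{pmatrix}=\begin{pmatrix}\alpha\alpha'+\mathbf{u}\cdot\mathbf{v}'&\alpha\mathbf{u}'+\beta'\mathbf{u}-\mathbf{v}\times\mathbf{v}'\\ \alpha'\mathbf{v}+\beta\mathbf{v}'+\mathbf{u}\times\mathbf{u}'&\beta\beta'+\mathbf{v}\cdot\mathbf{u}'\end{pmatrix}$ (dot product and cross product on $\mathbb{F}^3$). Trace $\mathrm{tr}(a)=\alpha+\beta$, norm $n(a)=\alpha\beta-\mathbf{u}\cdot\mathbf{v}$. With $\mathbf{c}_1$ the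 first standard basis vector of $\mathbb{F}^3$: $e_1$ has $\alpha=1$ and all else $0$, $e_2$ has $\beta=1$ and all else $0$, $\mathbf{u}_1$ has $\mathbf{u}=\mathbf{c}_1$ and all else $0$, $\mathbf{v}_1$ has $\mathbf{v}=\mathbf{c}_1$ and all else $0$, $1_{\mathbf{O}}=e_1+e_2$. The quaternion subalgebra is $\mathbb{M}=\left\{\begin{pmatrix}\alpha&(\gamma,0,0)\\(\delta,0,0)&\beta\end{pmatrix}\mid\alpha,\beta,\gamma,\delta\in\mathbb{F}\right\}$ (isomorphic to $M_2(\mathbb{F})$). ${\rm G}_2=\mathrm{Aut}(\mathbf{O})$. *)

(* Defs.v *)
From HB Require Import structures.
From mathcomp Require Import all_boot all_order all_algebra all_field.
Set Implicit Arguments. Unset Strict Implicit. Unset Printing Implicit Defensive.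
Import GRing.Theory.
Local Open Scope ring_scope.

(* Split octonions over a field F, as formal 2x2 "Zorn vector matrices". *)
Section Oct.
Variable F : fieldType.

Record vec3 := V3 { c1 : F; c2 : F; c3 : F }.

Definition vzero : vec3 := V3 0 0 0.
Definition vadd (x y : vec3) := V3 (c1 x + c1 y) (c2 x + c2 y) (c3 x + c3 y).
Definition vscale (k : F) (x : vec3) := V3 (k * c1 x) (k * c2 x) (k * c3 x).
Definition vopp (x : vec3) := V3 (- c1 x) (- c2 x) (- c3 x).
Definition dot (x y : vec3) : F := c1 x * c1 y + c2 x * c2 y + c3 x * c3 y.
Definition cross (x y : vec3) : vec3 :=
  V3 (c2 x * c3 y - c3 x * c2 y) (c3 x * c1 y - c1 x * c3 y) (c1 x * c2 y - c2 x * c1 y).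

(* [oa, ou; ov, ob] *)
Record oct := Oct { oa : F; ou : vec3; ov : vec3; ob : F }.

Definition oadd (x y : oct) :=
  Oct (oa x + oa y) (vadd (ou x) (ou y)) (vadd (ov x) (ov y)) (ob x + ob y).
Definition oscale (k : F) (x : oct) :=
  Oct (k * oa x) (vscale k (ou x)) (vscale k (ov x)) (k * ob x).

Definition omul (x y : oct) : oct :=
  Oct (oa x * oa y + dot (ou x) (ov y))
      (vadd (vadd (vscale (oa x) (ou y)) (vscale (ob y) (ou x))) (vopp (cross (ov x) (ov y))))
      (vadd (vadd (vscale (oa y) (ov x)) (vscale (ob x) (ov y))) (cross (ou x) (ou y)))
      (ob x * ob y + dot (ov x) (ou y)).

Definition otr (x : oct) : F := oa x + ob x.
Definition onorm (x : oct) : F := oa x * ob x - dot (ou x) (ov x).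

Definition cvec1 : vec3 := V3 1 0 0.
Definition e1 : oct := Oct 1 vzero vzero 0.
Definition e2 : oct := Oct 0 vzero vzero 1.
Definition u1 : oct := Oct 0 cvec1 vzero 0.
Definition v1 : oct := Oct 0 vzero cvec1 0.
Definition one_O : oct := oadd e1 e2.

Definition mkM (a b g d : F) : oct := Oct a (V3 g 0 0) (V3 d 0 0) b.
Definition inM (x : oct) : Prop := exists a b g d, x = mkM a b g d.

Definition is_G2 (g : oct -> oct) : Prop :=
  [/\ (forall x y, g (oadd x y) = oadd (g x) (g y)),
      (forall k x, g (oscale k x) = oscale k (g x)),
      (forall x y, g (omul x y) = omul (g x) (g y)) &
      bijective g].

Definition in_StabM (g : oct -> oct) : Prop :=
  is_G2 g /\ (forall x, inM x -> inM (g x)).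

End Oct.

(* Main.v *)
Require Import Defs.
From mathcomp Require Import all_boot all_order all_algebra all_field.
From mathcomp Require Import ring.
Import GRing.Theory.
Local Open Scope ring_scope.
Set Implicit Arguments. Unset Strict Implicit. Unset Printing Implicit Defensive.

Section S.
Variable F : fieldType.
Lemma oct_ext (a a' b b' x1 x2 x3 y1 y2 y3 x1' x2' x3' y1' y2' y3' : F) :
  a = a' -> x1 = x1' -> x2 = x2' -> x3 = x3' -> y1 = y1' -> y2 = y2' -> y3 = y3' -> b = b' ->
  Oct a (V3 x1 x2 x3) (V3 y1 y2 y3) b = Oct a' (V3 x1' x2' x3') (V3 y1' y2' y3') b'.
Proof. by move=> -> -> -> -> -> -> -> ->. Qed.

Ltac octs := repeat match goal with
  | x : oct F |- _ => let a := fresh "a" in let b := fresh "b" in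
      let x1 := fresh "x" in let x2 := fresh "x" in let x3 := fresh "x" in
      let y1 := fresh "y" in let y2 := fresh "y" in let y3 := fresh "y" in
      case: x => a [x1 x2 x3] [y1 y2 y3] b
  end; rewrite /omul /oadd /oscale /dot /cross /vadd /vscale /vopp /=.

Definition Ufun (t : F) (x : oct F) :=
  Oct (oa x + t * c1 (ov x))
      (V3 (c1 (ou x) - t * oa x + t * ob x - t ^+ 2 * c1 (ov x)) (c2 (ou x)) (c3 (ou x)))
      (V3 (c1 (ov x)) (c2 (ov x) + t * c3 (ou x)) (c3 (ov x) - t * c2 (ou x)))
      (ob x - t * c1 (ov x)).
Definition Tfun (g : F) (x : oct F) :=
  Oct (oa x) (V3 (g * c1 (ou x)) (g^-1 * c2 (ou x)) (c3 (ou x)))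
      (V3 (g^-1 * c1 (ov x)) (g * c2 (ov x)) (c3 (ov x))) (ob x).
Definition Wfun (x : oct F) := Oct (ob x) (vopp (ov x)) (vopp (ou x)) (oa x).

Lemma stab_comp (f g : oct F -> oct F) : in_StabM f -> in_StabM g -> in_StabM (f \o g).
Proof.
move=> [[fa fs fm fb] fM] [[ga gs gm gb] gM]; split; last by move=> x /gM /fM.
split=> [x y|k x|x y|] /=; first by rewrite ga fa.
- by rewrite gs fs.
- by rewrite gm fm.
exact: bij_comp.
Qed.

Lemma stab_id : in_StabM (@id (oct F)).
Proof. split=> //; split=> //; exact: (Bijective (g:=id)). Qed.

Lemma stabU t : in_StabM (Ufun t).
Proof.
split; last first.
  move=> x [a [b [g [d ->]]]].
  exists (a + t * d), (b - t * d), (g - t * a + t * b - t ^+ 2 * d), d.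
  rewrite /Ufun /mkM /=; apply: oct_ext; ring.
split.
- move=> x y; rewrite /Ufun; octs; apply: oct_ext; ring.
- move=> k x; rewrite /Ufun; octs; apply: oct_ext; ring.
- move=> x y; rewrite /Ufun; octs; apply: oct_ext; ring.
exists (Ufun (- t)) => x; rewrite /Ufun; octs; apply: oct_ext; ring.
Qed.

Lemma stabW : in_StabM Wfun.
Proof.
split; last first.
  move=> x [a [b [g [d ->]]]].
  exists b, a, (- d), (- g).
  rewrite /Wfun /mkM /vopp /=; apply: oct_ext; ring.
split.
- move=> x y; rewrite /Wfun; octs; apply: oct_ext; ring.
- move=> k x; rewrite /Wfun; octs; apply: oct_ext; ring.
- move=> x y; rewrite /Wfun; octs; apply: oct_ext; ring.
exists Wfun => x; rewrite /Wfun; octs; apply: oct_ext; ring.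
Qed.

Lemma stabT g : g != 0 -> in_StabM (Tfun g).
Proof.
move=> g0.
split; last first.
  move=> x [a [b [c [d ->]]]].
  exists a, b, (g * c), (g^-1 * d).
  rewrite /Tfun /mkM /=; apply: oct_ext; ring.
split.
- move=> x y; rewrite /Tfun; octs; apply: oct_ext; ring.
- move=> k x; rewrite /Tfun; octs; apply: oct_ext; ring.
- move=> x y; rewrite /Tfun; octs; apply: oct_ext; by field.
apply: (Bijective (g:=Tfun g^-1)) => x; rewrite /Tfun; octs; apply: oct_ext; rewrite ?invrK; by field.
Qed.

Lemma zero_of (A L R : F) : L = R -> A = L - R -> A = 0.
Proof. by move=> -> ->; rewrite subrr. Qed.

Lemma one_mul y : omul (one_O F) y = y.
Proof. rewrite /one_O /e1 /e2 /vzero; octs; apply: oct_ext; ring. Qed.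
Lemma mul_one y : omul y (one_O F) = y.
Proof. rewrite /one_O /e1 /e2 /vzero; octs; apply: oct_ext; ring. Qed.

Lemma quad (x : oct F) : omul x x = oadd (oscale (otr x) x) (oscale (- onorm x) (one_O F)).
Proof. rewrite /one_O /e1 /e2 /vzero /otr /onorm; octs; apply: oct_ext; ring. Qed.

Lemma G2_one (h : oct F -> oct F) : is_G2 h -> h (one_O F) = one_O F.
Proof.
move=> [ha hs hm [k hk kh]].
have := hm (one_O F) (k (one_O F)).
by rewrite one_mul kh mul_one.
Qed.

Lemma G2_inv (h : oct F -> oct F) x : is_G2 h -> otr (h x) = otr x /\ onorm (h x) = onorm x.
Proof.
move=> hG; have h1 := @G2_one h hG; case: hG => ha hs hm hb.
have E : oadd (oscale (otr x) (h x)) (oscale (- onorm x) (one_O F)) =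
         oadd (oscale (otr (h x)) (h x)) (oscale (- onorm (h x)) (one_O F)).
  by rewrite -quad -hm quad ha !hs h1.
case Hy: (h x) E => [ya [yu1 yu2 yu3] [yv1 yv2 yv3] yb].
set tx := otr x; set nx := onorm x.
rewrite /oadd /oscale /one_O /e1 /e2 /vadd /vscale /vzero /otr /onorm /dot /=.
case => Ea Eu1 Eu2 Eu3 Ev1 Ev2 Ev3 Eb.
case: (eqVneq tx (ya + yb)) => [Etr|Ptr].
  split; first by rewrite Etr.
  apply/eqP; rewrite -subr_eq0; apply/eqP; apply: (zero_of Ea); rewrite Etr; ring.
have P : tx - (ya + yb) != 0 by rewrite subr_eq0.
have Z : forall z (L R : F), L = R -> (tx - (ya + yb)) * z = L - R -> z = 0.
  move=> z L R ELR EA; have := zero_of ELR EA; move/eqP; rewrite mulf_eq0 (negbTE P) /=.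
  by move/eqP.
have zu1 : yu1 = 0 by apply: (Z _ _ _ Eu1); ring.
have zu2 : yu2 = 0 by apply: (Z _ _ _ Eu2); ring.
have zu3 : yu3 = 0 by apply: (Z _ _ _ Eu3); ring.
have zv1 : yv1 = 0 by apply: (Z _ _ _ Ev1); ring.
have zv2 : yv2 = 0 by apply: (Z _ _ _ Ev2); ring.
have zv3 : yv3 = 0 by apply: (Z _ _ _ Ev3); ring.
have := congr2 (fun p q => p - q) Ea Eb => /= Eab0.
have zab : ya - yb = 0 by apply: (Z _ _ _ Eab0); ring.
have Eab := subr0_eq zab.
subst.
have : h (oscale yb (one_O F)) = h x.
  rewrite hs h1 Hy /oscale /one_O /e1 /e2 /vadd /vscale /vzero /=; apply: oct_ext; ring.
move/(bij_inj hb) => Ex.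
case/eqP: Ptr; rewrite /tx -Ex /otr /oscale /one_O /e1 /e2 /oadd /=; ring.
Qed.

Unset Implicit Arguments.
Definition reach (X Y : oct F) := exists h, in_StabM h /\ h X = Y.

Lemma reach_step Y' {X Y Z} : reach X Y -> Y = Y' -> reach Y' Z -> reach X Z.
Proof.
move=> [h [hS hX]] <- [k [kS kY]]; exists (k \o h); split; first exact: stab_comp.
by rewrite /= hX.
Qed.

Lemma reach_eq X Y : X = Y -> reach X Y.
Proof. by move=> <-; exists id; split; first exact: stab_id. Qed.

Lemma mkM_eq (a b g d a' b' g' d' : F) : a = a' -> b = b' -> g = g' -> d = d' ->
  mkM a b g d = mkM a' b' g' d'.
Proof. by move=> -> -> -> ->. Qed.

Lemma reachU t a b g d :
  reach (mkM a b g d) (mkM (a + t * d) (b - t * d) (g - t * a + t * b - t ^+ 2 * d) d).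
Proof.
exists (Ufun t); split; first exact: stabU.
rewrite /Ufun /mkM /=; apply: oct_ext; ring.
Qed.

Lemma reachW a b g d : reach (mkM a b g d) (mkM b a (- d) (- g)).
Proof.
exists Wfun; split; first exact: stabW.
rewrite /Wfun /mkM /vopp /=; apply: oct_ext; ring.
Qed.

Lemma T_mkM (c a b g d : F) : Tfun c (mkM a b g d) = mkM a b (c * g) (c^-1 * d).
Proof. rewrite /Tfun /mkM /=; apply: oct_ext; ring. Qed.

Lemma reachT c a b g d : c != 0 -> reach (mkM a b g d) (mkM a b (c * g) (c^-1 * d)).
Proof. by move=> c0; exists (Tfun c); split; [exact: stabT | exact: T_mkM]. Qed.

Lemma part1 (a b g d : F) : a + b = 1 -> a * b - g * d = 0 ->
  reach (mkM a b g d) (mkM 1 0 0 0).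
Proof.
move=> Htr Hn.
have Eb : b = 1 - a by rewrite -Htr; ring.
subst b.
case: (eqVneq d 0) => [d0|d0].
  subst d.
  case: (eqVneq a 0) => [a0|a0].
    subst a.
    apply: (reach_step (mkM 0 1 0 0) (reachU (- g) _ _ _ _)).
      by apply: mkM_eq; ring.
    apply: (reach_step (mkM 1 0 0 0) (reachW _ _ _ _)).
      by apply: mkM_eq; ring.
    exact: reach_eq.
  have a1 : a = 1.
    have : a * (1 - a) = 0 by rewrite -Hn; ring.
    move/eqP; rewrite mulf_eq0 (negbTE a0) /= subr_eq0 => /eqP <-//.
  subst a.
  apply: (reach_step (mkM 1 0 0 0) (reachU g _ _ _ _)).
    by apply: mkM_eq; ring.
  exact: reach_eq.
have Eg : g = a * (1 - a) / d.
  apply: (mulIf d0); rewrite divfK //.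
  apply/eqP; rewrite eq_sym -subr_eq0; apply/eqP; rewrite -Hn; ring.
subst g.
apply: (reach_step (mkM 0 1 0 d) (reachU (- a / d) _ _ _ _)).
  by apply: mkM_eq; field.
apply: (reach_step (mkM 1 0 (- d) 0) (reachW _ _ _ _)).
  by apply: mkM_eq; ring.
apply: (reach_step (mkM 1 0 0 0) (reachU (- d) _ _ _ _)).
  by apply: mkM_eq; ring.
exact: reach_eq.
Qed.

Section Char2.
Hypothesis two0 : (2 : F) = 0.

Lemma c2eq (x y z : F) : x - y = 2 * z -> x = y.
Proof. by rewrite two0 mul0r => /subr0_eq. Qed.

Lemma part2 (a b g d : F) : a + b = 0 -> a * b - g * d = 1 ->
  reach (mkM a b g d) (mkM 1 1 0 0) \/ reach (mkM a b g d) (mkM 1 1 1 0).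
Proof.
move=> Htr Hn.
have Eb : b = a.
  apply: (c2eq _ _ (- a)); rewrite (_ : b = (a + b) - a); last by ring.
  rewrite Htr; ring.
subst b.
case: (eqVneq d 0) => [d0|d0].
  subst d.
  have a1 : a = 1.
    have : (a - 1) * (a - 1) = 0.
      have Hn' : a * a = 1 by rewrite -Hn; ring.
      apply: (c2eq _ _ (1 - a)); have -> : (a - 1) * (a - 1) = a * a + (1 - 2 * a) by ring.
      rewrite Hn'; ring.
    by move/eqP; rewrite mulf_eq0 orbb subr_eq0 => /eqP.
  subst a.
  case: (eqVneq g 0) => [g0|g0].
    by subst g; left; exact: reach_eq.
  right; apply: (reach_step (mkM 1 1 1 0) (reachT _ _ _ _ _ (invr_neq0 g0))).
    by apply: mkM_eq; rewrite ?invrK ?mulr0 ?mulVf.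
  exact: reach_eq.
have Eg : g = (a * a - 1) / d.
  apply: (mulIf d0); rewrite divfK //.
  by rewrite -Hn; ring.
subst g.
right.
apply: (reach_step (mkM 1 1 0 d) (reachU ((1 - a) / d) _ _ _ _)).
  apply: mkM_eq => //.
  - by field.
  - by apply: (c2eq _ _ (a - 1)); field.
  - by apply: (c2eq _ _ ((a - 1) / d)); field.
apply: (reach_step (mkM 1 1 (- d) 0) (reachW _ _ _ _)).
  by apply: mkM_eq; ring.
have nd0 : - d^-1 != 0 by rewrite oppr_eq0 invr_eq0.
apply: (reach_step (mkM 1 1 1 0) (reachT _ _ _ _ _ nd0)).
  by apply: mkM_eq => //; rewrite ?mulr0 ?mulrNN ?mulVf.
exact: reach_eq.
Qed.
End Char2.
End S.

Theorem lemma7p5 (F : closedFieldType) (char2 : (2 \in [pchar F])%N) :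
  (* 1 *)
  (forall a : oct F, inM a -> otr a = 1 -> onorm a = 0 ->
     exists g, in_StabM g /\ g a = e1 F) /\
  (* 2 *)
  (forall a : oct F, inM a -> otr a = 0 -> onorm a = 1 ->
     exists g, in_StabM g /\ (g a = one_O F \/ g a = oadd (one_O F) (u1 F))) /\
  (* 3 *)
  (forall gam : F, gam != 0 ->
     exists xi, in_StabM xi /\
       forall a1 a2 a3 a4 : F,
         xi (mkM a1 a4 a2 a3) = mkM a1 a4 (gam * a2) (gam^-1 * a3)) /\
  (* 4 *)
  (forall b1 b2 : oct F, inM b1 -> inM b2 ->
     otr b1 = otr (e1 F) -> otr b2 = otr (e2 F) ->
     onorm b1 = onorm (e1 F) -> onorm b2 = onorm (e2 F) ->
     otr (omul b1 b2) = otr (omul (e1 F) (e2 F)) ->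
     exists g, in_StabM g /\ g b1 = e1 F /\
       (g b2 = e2 F \/ g b2 = oadd (e2 F) (u1 F) \/ g b2 = oadd (e2 F) (v1 F))) /\
  (* 5 *)
  (forall b : oct F, inM b -> otr b = 0 -> onorm b = 0 -> otr (omul (e1 F) b) = 0 ->
     (exists c : F, b = oscale c (u1 F)) \/ (exists c : F, b = oscale c (v1 F))).
Proof.
have two0 : (2 : F) = 0 := pcharf0 char2.
have E1 : e1 F = mkM 1 0 0 0 by [].
have E2 : e2 F = mkM 0 1 0 0 by [].
have P1 : forall a : oct F, inM a -> otr a = 1 -> onorm a = 0 ->
     exists g, in_StabM g /\ g a = e1 F.
  move=> _ [x [y [g [d ->]]]]; rewrite /otr /onorm /dot /= => Htr Hn.
  have Hn' : x * y - g * d = 0 by rewrite -Hn; ring.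
  have [h [hS hE]] := @part1 F x y g d Htr Hn'.
  by exists h; split => //; rewrite hE.
split; first exact: P1.
split.
  move=> _ [x [y [g [d ->]]]]; rewrite /otr /onorm /dot /= => Htr Hn.
  have Hn' : x * y - g * d = 1 by rewrite -Hn; ring.
  have [[h [hS hE]]|[h [hS hE]]] := @part2 F two0 x y g d Htr Hn'.
    by exists h; split => //; left; rewrite hE /one_O /e1 /e2 /mkM /oadd /vadd /vzero /=; apply: oct_ext; ring.
  by exists h; split => //; right; rewrite hE /one_O /e1 /e2 /u1 /cvec1 /mkM /oadd /vadd /vzero /=; apply: oct_ext; ring.
split.
  move=> gam g0; exists (Tfun gam); split; first exact: stabT.
  by move=> a1 a2 a3 a4; rewrite T_mkM.
split.
  move=> b1 b2 Hb1 Hb2 Htr1 Htr2 Hn1 Hn2 Hp.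
  have Htr1' : otr b1 = 1 by rewrite Htr1 /otr /=; ring.
  have Hn1' : onorm b1 = 0 by rewrite Hn1 /onorm /dot /=; ring.
  have [h1 [hS hE]] := P1 b1 Hb1 Htr1' Hn1'.
  have [x [y [g [d Eb2]]]] := hS.2 b2 Hb2.
  have [Itr In] := @G2_inv F h1 b2 hS.1.
  have [Ip _] := @G2_inv F h1 (omul b1 b2) hS.1.
  have := hS.1; case=> _ _ hm _.
  rewrite hm hE Eb2 Hp in Ip.
  rewrite Eb2 Htr2 in Itr. rewrite Eb2 Hn2 in In.
  move: Ip Itr In; rewrite /otr /onorm /omul /dot /e1 /e2 /mkM /vzero /=.
  move=> Ip Itr In.
  rewrite !(mul0r, mulr0, mul1r, mulr1, addr0, add0r, subr0, sub0r, oppr0) in Ip Itr In.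
  subst x.
  rewrite add0r in Itr; subst y.
  move: In; rewrite mul0r sub0r => /eqP; rewrite oppr_eq0 => /eqP gd.
  case: (eqVneq g 0) => [g0|g0].
    subst g; case: (eqVneq d 0) => [d0|d0].
      by subst d; exists h1; split=> //; split=> //; left; rewrite Eb2.
    exists (Tfun d \o h1); split; first by apply: stab_comp => //; exact: stabT.
    split; first by rewrite /= hE E1 T_mkM !mulr0.
    right; right; rewrite /= Eb2 T_mkM /mkM /oadd /v1 /vadd /cvec1 /=.
    by apply: oct_ext; rewrite ?mulVf //; ring.
  have d0 : d = 0 by move/eqP: gd; rewrite mulf_eq0 (negbTE g0) => /eqP.
  subst d.
  exists (Tfun g^-1 \o h1); split; first by apply: stab_comp => //; apply: stabT; rewrite invr_eq0.
  split; first by rewrite /= hE E1 T_mkM !mulr0.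
  right; left; rewrite /= Eb2 T_mkM /mkM /oadd /u1 /vadd /cvec1 /=.
  by apply: oct_ext; rewrite ?mulVf //; ring.
move=> _ [x [y [g [d ->]]]]; rewrite /otr /onorm /omul /e1 /dot /mkM /vzero /= => Htr Hn He.
rewrite !(mul0r, mulr0, mul1r, mulr1, addr0, add0r, subr0, sub0r, oppr0) in Htr Hn He.
subst x; rewrite add0r in Htr; subst y.
move: Hn; rewrite mul0r sub0r => /eqP; rewrite oppr_eq0 => /eqP gd.
case: (eqVneq g 0) => [g0|g0].
  subst g; right; exists d; rewrite /oscale /v1 /cvec1 /=; apply: oct_ext; rewrite /vzero /=; ring.
have d0 : d = 0 by move/eqP: gd; rewrite mulf_eq0 (negbTE g0) => /eqP.
subst d; left; exists g; rewrite /oscale /u1 /cvec1 /=; apply: oct_ext; rewrite /vzero /=; ring.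
Qed.
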